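(* Let $F$ be a non-archimedean local field of characteristic different from $2$ and residual characteristic $p$, and $\ell\neq p$ an odd prime. Let $\chi$ be an $\overline{\mathbf{F}}_\ell$-character of $F^\times$ with $\chi^2=\mathbf{1}$. Then $\mathrm{Ext}^1_{\mathrm{GL}_2(F)}(\mathbf{1},\chi\circ\det)=0$, where $\mathrm{Ext}^1_{\mathrm{GL}_2(F)}$ is computed in the category of smooth $\overline{\mathbf{F}}_\ell$-representations of $\mathrm{GL}_2(F)$ with trivial central character. *)

(* Defs.v *)
From HB Require Import structures.
From mathcomp Require Import all_boot all_order all_algebra.
Set Implicit Arguments. Unset Strict Implicit. Unset Printing Implicit Defensive.
Import Order.TTheory GRing.Theory Num.Theory.
Local Open Scope ring_scope.

Section LocalField.
Variables (F : fieldType) (v : F -> int).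

(* v is a normalized (surjective onto Z) discrete valuation on F^x;
   its value at 0 is irrelevant (conventionally +oo). *)
Definition discrete_valuation : Prop :=
  [/\ forall x y, x != 0 -> y != 0 -> v (x * y) = v x + v y,
      forall x y, x != 0 -> y != 0 -> x + y != 0 ->
        (v x <= v (x + y)) || (v y <= v (x + y))
    & forall n : int, exists x, x != 0 /\ v x = n ].

(* x and y are congruent modulo p^n, i.e. v(x - y) >= n (with v 0 = +oo). *)
Definition vclose (n : int) (x y : F) : bool := (x == y) || (n <= v (x - y)).

Definition v_complete : Prop :=
  forall u : nat -> F,
    (forall n : int, exists M, forall i j, (M <= i)%N -> (M <= j)%N -> vclose n (u i) (u j)) ->
    exists L, forall n : int, exists M, forall i, (M <= i)%N -> vclose n (u i) L.

Definition in_O (x : F) : bool := (x == 0) || (0 <= v x).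

Definition finite_residue_field : Prop :=
  exists s : seq F, all in_O s /\ forall x, in_O x -> exists2 y, y \in s & vclose 1 x y.

Definition nonarch_local_field : Prop :=
  [/\ discrete_valuation, v_complete & finite_residue_field].

Definition residual_char (p : nat) : Prop := prime p /\ vclose 1 (p%:R) 0.

Definition in_congr (n : nat) (g : 'M[F]_2) : Prop :=
  forall i j, vclose n%:Z (g i j) ((1%:M : 'M[F]_2) i j).

Definition smooth_character (C : fieldType) (chi : F -> C) : Prop :=
  [/\ forall x, x != 0 -> chi x != 0,
      forall x y, x != 0 -> y != 0 -> chi (x * y) = chi x * chi y
    & exists n : nat, forall x, x != 0 -> vclose n%:Z x 1 -> chi x = 1].

(* rho : GL_2(F) -> GL(E) is a smooth representation with trivial central
   character (rho is only meaningful on invertible matrices). *)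
Definition smooth_rep_tcc (C : fieldType) (E : lmodType C) (rho : 'M[F]_2 -> E -> E) : Prop :=
  [/\ forall g, g \in unitmx -> forall (a : C) (x y : E), rho g (a *: x + y) = a *: rho g x + rho g y,
      forall x, rho 1%:M x = x,
      forall g h, g \in unitmx -> h \in unitmx -> forall x, rho (g *m h) x = rho g (rho h x),
      forall x, exists n : nat, forall g, g \in unitmx -> in_congr n g -> rho g x = x
    & forall a : F, a != 0 -> forall x, rho (a%:M) x = x].
End LocalField.

(* C is an algebraic closure of F_l: algebraically closed, characteristic l,
   and every element lies in a finite field F_{l^n}. *)
Definition alg_closure_Fp (l : nat) (C : closedFieldType) : Prop :=
  l \in [pchar C] /\ forall x : C, exists n : nat, (0 < n)%N /\ x ^+ (l ^ n) = x.

Definition lin_from (C : fieldType) (E : lmodType C) (f : C -> E) : Prop :=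
  forall a x y : C, f (a * x + y) = a *: f x + f y.
Definition lin_to (C : fieldType) (E : lmodType C) (f : E -> C) : Prop :=
  forall (a : C) (x y : E), f (a *: x + y) = a * f x + f y.

(* Main.v *)
Require Import Defs.
From HB Require Import structures.
From mathcomp Require Import all_boot all_order all_algebra.
From mathcomp Require Import ring.
From Stdlib Require Classical_Prop.
Set Warnings "-all".
Import GRing.Theory Num.Theory.
Local Open Scope ring_scope.

Definition mx2 (R : nzRingType) (a b c d : R) : 'M[R]_2 :=
  \matrix_(i, j) if val i == 0%N then (if val j == 0%N then a else b)
                 else (if val j == 0%N then c else d).
Arguments mx2 {R}.

Lemma mx2E (R : nzRingType) (g : 'M[R]_2) : g = mx2 (g 0 0) (g 0 1) (g 1 0) (g 1 1).
Proof.
apply/matrixP => i j; rewrite !mxE.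
by case: i => [[|[|//]]] ?; case: j => [[|[|//]]] ? /=; congr (g _ _); apply: val_inj.
Qed.

Lemma mx2_mul (R : nzRingType) (a b c d a' b' c' d' : R) :
  mx2 a b c d *m mx2 a' b' c' d' =
  mx2 (a * a' + b * c') (a * b' + b * d') (c * a' + d * c') (c * b' + d * d').
Proof.
apply/matrixP => i j; rewrite !mxE !big_ord_recl big_ord0 !mxE /= addr0.
by case: i => [[|[|//]]] ?; case: j => [[|[|//]]] ? /=.
Qed.

Lemma det_mx2 (R : comNzRingType) (a b c d : R) : \det (mx2 a b c d) = a * d - b * c.
Proof.
rewrite (expand_det_row _ 0) !big_ord_recl big_ord0 addr0 /cofactor !det_mx11 !mxE /=.
by rewrite /bump /= expr0 expr1 !mul1r mulN1r mulrN.
Qed.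

Lemma scal_mx2 (R : nzRingType) (a : R) : a%:M = mx2 a 0 0 a.
Proof.
apply/matrixP => i j; rewrite !mxE.
by case: i => [[|[|//]]] ?; case: j => [[|[|//]]] ? /=.
Qed.

Lemma mx2_unit (F : fieldType) (a b c d : F) :
  (mx2 a b c d \in unitmx) = (a * d - b * c != 0).
Proof. by rewrite unitmxE det_mx2 unitfE. Qed.

Lemma mx2_eq (R : nzRingType) (a b c d a' b' c' d' : R) :
  a = a' -> b = b' -> c = c' -> d = d' -> mx2 a b c d = mx2 a' b' c' d'.
Proof. by move=> -> -> -> ->. Qed.

Theorem lemma4p4 (F : fieldType) (v : F -> int) (p l : nat)
    (C : closedFieldType) (chi : F -> C)
    (HF : nonarch_local_field v) (Hchar2 : (2 : F) != 0)
    (Hp : residual_char v p)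
    (Hl : prime l) (Hl2 : l != 2%N) (Hlp : l != p)
    (HC : alg_closure_Fp l C)
    (Hchi : smooth_character v chi)
    (Hchi2 : forall x : F, x != 0 -> chi x ^+ 2 = 1) :
  forall (E : lmodType C) (rho : 'M[F]_2 -> E -> E) (i : C -> E) (q : E -> C),
    smooth_rep_tcc v rho ->
    lin_from i -> injective i ->
    (forall g, g \in unitmx -> forall c, rho g (i c) = i (chi (\det g) * c)) ->
    lin_to q -> (forall c, exists e, q e = c) ->
    (forall g, g \in unitmx -> forall e, q (rho g e) = q e) ->
    (forall e, q e = 0 <-> exists c, e = i c) ->
    exists s : C -> E,
      [/\ lin_from s, forall c, q (s c) = c
        & forall g, g \in unitmx -> forall c, rho g (s c) = s c].
Proof.
move=> E rho i q [rlin rho1 rhoM _ rhoZ] ilin iinj irho qlin qsurj qrho qker.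
have two_nz : (2 : C) != 0.
  apply/negP => /eqP h2.
  have h : (2%N \in [pchar C]) by apply/andP; split => //; rewrite h2.
  by move: (pcharf_eq HC.1 2%N); rewrite h => /esym /eqP e2; rewrite e2 eqxx in Hl2.
have i0 : i 0 = 0.
  have h := ilin 1 0 0; rewrite mulr0 add0r scale1r in h.
  by apply: (@addrI _ (i 0)); rewrite addr0 -h.
have iD x y : i (x + y) = i x + i y by have := ilin 1 x y; rewrite mul1r scale1r.
have q0 : q 0 = 0.
  have h := qlin 1 0 0; rewrite scaler0 add0r mul1r in h.
  by apply: (@addrI _ (q 0)); rewrite addr0 -h.
have qD x y : q (x + y) = q x + q y by have := qlin 1 x y; rewrite scale1r mul1r.
have qM a x : q (a *: x) = a * q x by have := qlin a x 0; rewrite !addr0 q0 addr0.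
have qN x : q (- x) = - q x by rewrite -scaleN1r qM mulN1r.
have r0 g : g \in unitmx -> rho g 0 = 0.
  move=> Hg; have h := rlin g Hg 1 0 0; rewrite scaler0 add0r scale1r in h.
  by apply: (@addrI _ (rho g 0)); rewrite addr0 -h.
have rD g x y : g \in unitmx -> rho g (x + y) = rho g x + rho g y.
  by move=> Hg; have := rlin g Hg 1 x y; rewrite !scale1r.
have rM g a x : g \in unitmx -> rho g (a *: x) = a *: rho g x.
  by move=> Hg; have := rlin g Hg a x 0; rewrite !addr0 r0 // addr0.
have key e g : g \in unitmx -> exists c, rho g e = e + i c.
  move=> Hg; have /qker [c hc] : q (rho g e - e) = 0 by rewrite qD qN qrho // subrr.
  by exists c; rewrite -hc [e + _]addrC subrK.
have [e0 he0] := qsurj 1.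
have [chi_nz chiM _] := Hchi.
have chi1 : chi 1 = 1.
  have h := chiM 1 1 (oner_neq0 _) (oner_neq0 _); rewrite mulr1 in h.
  by apply: (mulfI (chi_nz 1 (oner_neq0 _))); rewrite mulr1 -h.
pose dg (a : F) := mx2 a 0 0 1.
pose uu (y : F) := mx2 1 y 0 1.
pose ll (y : F) := mx2 1 0 y 1.
have det_dg a : \det (dg a) = a by rewrite det_mx2 mulr1 mulr0 subr0.
have dg_unit a : a != 0 -> dg a \in unitmx by move=> ?; rewrite unitmxE det_dg unitfE.
have uu_unit y : uu y \in unitmx by rewrite mx2_unit mulr1 mulr0 subr0 oner_eq0.
have ll_unit y : ll y \in unitmx by rewrite mx2_unit mulr1 mul0r subr0 oner_eq0.
have det_uu y : \det (uu y) = 1 by rewrite det_mx2 mulr1 mulr0 subr0.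
have det_ll y : \det (ll y) = 1 by rewrite det_mx2 mulr1 mul0r subr0.
have [[vM _ vsurj] _ _] := HF.
have [b [bnz vb]] := vsurj 1.
have v1 : v 1 = 0.
  have h := vM 1 1 (oner_neq0 _) (oner_neq0 _); rewrite mulr1 in h.
  by apply: (@addrI _ (v 1)); rewrite addr0 -h.
pose a := b * b.
have anz : a != 0 by rewrite mulf_neq0.
have an1 : a - 1 != 0.
  rewrite subr_eq0; apply/negP => /eqP ha.
  by move: (vM b b bnz bnz); rewrite -/a ha v1 vb.
have chia : chi a = 1 by rewrite chiM // -expr2 Hchi2.
have chiai : chi a^-1 = 1.
  have := chiM a a^-1 anz (invr_neq0 anz); rewrite mulfV // chi1 chia mul1r.
  by move=> <-.
have Hmain e : ((forall x, x != 0 -> chi x = 1) \/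
     (exists x0, [/\ x0 != 0, chi x0 = -1 & rho (dg x0) e = e])) ->
     forall g, g \in unitmx -> rho g e = e.
  move=> Hcase.
  have fex g : exists c, (g \in unitmx) ==> (rho g e == e + i c).
    case: (boolP (g \in unitmx)) => Hg; last by exists 0.
    by have [c hc] := key e g Hg; exists c; rewrite hc eqxx.
  pose f g := xchoose (fex g).
  have fP g : g \in unitmx -> rho g e = e + i (f g).
    by move=> Hg; have /implyP /(_ Hg) /eqP := xchooseP (fex g).
  have fE g c : g \in unitmx -> rho g e = e + i c -> f g = c.
    by move=> Hg h; apply: iinj; apply: (@addrI _ e); rewrite -fP.
  have fM g h : g \in unitmx -> h \in unitmx ->
      f (g *m h) = f g + chi (\det g) * f h.
    move=> Hg Hh; apply: fE; first by rewrite unitmx_mul Hg Hh.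
    by rewrite rhoM // (fP h) // rD // (fP g) // irho // iD addrA.
  have f0 g : g \in unitmx -> rho g e = e -> f g = 0.
    by move=> Hg h; apply: fE => //; rewrite i0 addr0.
  have fMz g h : g \in unitmx -> h \in unitmx -> f g = 0 -> f h = 0 -> f (g *m h) = 0.
    by move=> Hg Hh Hfg Hfh; rewrite fM // Hfg Hfh mulr0 addr0.
  have fconj g h k : g \in unitmx -> h \in unitmx -> k \in unitmx ->
      f g = 0 -> f k = 0 -> f (g *m h *m k) = chi (\det g) * f h.
    move=> Hg Hh Hk Hfg Hfk.
    by rewrite fM ?unitmx_mul ?Hg ?Hh // fM // Hfg Hfk mulr0 addr0 add0r.
  have scal_unit (c : F) : c != 0 -> (c%:M : 'M[F]_2) \in unitmx.
    by move=> cnz; rewrite scal_mx2 mx2_unit mulr0 subr0 mulf_neq0.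
  have fscal (c : F) : c != 0 -> f (c%:M) = 0.
    by move=> cnz; apply: f0; [exact: scal_unit | exact: rhoZ].
  have half (x : C) : x + x = 0 -> x = 0.
    move=> h; have : x * 2 = 0 by rewrite mulr_natr mulr2n.
    by move/eqP; rewrite mulf_eq0 (negbTE two_nz) orbF => /eqP.
  have fdg c : c != 0 -> f (dg c) = 0.
    move=> cnz; case: Hcase => [H1 | [x0 [x0nz chix0 Ht]]].
    - have chid g : g \in unitmx -> chi (\det g) = 1.
        by move=> Hg; apply: H1; rewrite -unitfE -unitmxE.
      pose ww := mx2 (0 : F) 1 1 0.
      have ww_unit : ww \in unitmx.
        by rewrite mx2_unit mulr0 mulr1 sub0r oppr_eq0 oner_eq0.
      have fww : f ww + f ww = 0.
        have <- : f (ww *m ww) = f ww + f ww by rewrite fM // chid // mul1r.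
        have -> : ww *m ww = 1%:M.
          by rewrite mx2_mul scal_mx2; apply: mx2_eq; ring.
        by apply: fscal; exact: oner_neq0.
      have e1 : ww *m (dg c *m ww) = mx2 1 0 0 c.
        by rewrite !mx2_mul; apply: mx2_eq; ring.
      have e2 : dg c *m mx2 1 0 0 c = c%:M.
        by rewrite !mx2_mul scal_mx2; apply: mx2_eq; ring.
      have h1 : f (mx2 1 0 0 c) = f (dg c).
        rewrite -e1 fM ?unitmx_mul ?dg_unit // fM ?dg_unit // !chid ?dg_unit //.
        by rewrite !mul1r addrCA fww addr0.
      apply: half.
      have := fscal c cnz; rewrite -e2 fM ?dg_unit //; last first.
        by rewrite -e1 !unitmx_mul ww_unit dg_unit.
      by rewrite h1 chid ?dg_unit // mul1r.
    - have ft : f (dg x0) = 0 by apply: f0 => //; exact: dg_unit.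
      have comm : dg c *m dg x0 = dg x0 *m dg c.
        by rewrite !mx2_mul; apply: mx2_eq; ring.
      have := fM _ _ (dg_unit c cnz) (dg_unit x0 x0nz).
      rewrite comm fM ?dg_unit // ft !det_dg chix0 mulr0 addr0 add0r => h.
      by apply: half; rewrite -{1}h mulN1r addNr.
  have fu y : f (uu y) = 0.
    have add y1 y2 : f (uu (y1 + y2)) = f (uu y1) + f (uu y2).
      have -> : uu (y1 + y2) = uu y1 *m uu y2.
        by rewrite mx2_mul; apply: mx2_eq; ring.
      by rewrite fM // det_uu chi1 mul1r.
    have sc z : f (uu (a * z)) = f (uu z).
      have -> : uu (a * z) = dg a *m uu z *m dg a^-1.
        by rewrite !mx2_mul; apply: mx2_eq; field.
      rewrite fconj ?dg_unit ?invr_neq0 // ?fdg ?invr_neq0 //.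
      by rewrite det_dg chia mul1r.
    pose z := y / (a - 1).
    have : f (uu (a * z)) = f (uu y) + f (uu z).
      rewrite -add; congr (f (uu _)); rewrite /z; field.
      by rewrite an1.
    rewrite sc => h; apply: (@addIr _ (f (uu z))).
    by rewrite add0r -h.
  have fl y : f (ll y) = 0.
    have add y1 y2 : f (ll (y1 + y2)) = f (ll y1) + f (ll y2).
      have -> : ll (y1 + y2) = ll y1 *m ll y2.
        by rewrite mx2_mul; apply: mx2_eq; ring.
      by rewrite fM // det_ll chi1 mul1r.
    have sc z : f (ll (a * z)) = f (ll z).
      have -> : ll (a * z) = dg a^-1 *m ll z *m dg a.
        by rewrite !mx2_mul; apply: mx2_eq; field.
      rewrite fconj ?dg_unit ?invr_neq0 // ?fdg ?invr_neq0 //.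
      by rewrite det_dg chiai mul1r.
    pose z := y / (a - 1).
    have : f (ll (a * z)) = f (ll y) + f (ll z).
      rewrite -add; congr (f (ll _)); rewrite /z; field.
      by rewrite an1.
    rewrite sc => h; apply: (@addIr _ (f (ll z))).
    by rewrite add0r -h.
  have fgen al be ga de : al != 0 -> al * de - be * ga != 0 ->
      f (mx2 al be ga de) = 0.
    move=> alnz dnz.
    pose D := (al * de - be * ga) / al.
    have Dnz : D != 0 by rewrite mulf_neq0 ?invr_neq0.
    have -> : mx2 al be ga de = ll (ga / al) *m (D%:M *m dg (al / D)) *m uu (be / al).
      rewrite scal_mx2 !mx2_mul; apply: mx2_eq; rewrite /D; field.
      - by rewrite dnz alnz.
      - by rewrite alnz.
      - by rewrite dnz alnz.
      - by rewrite dnz alnz.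
    have Hd : D%:M *m dg (al / D) \in unitmx.
      by rewrite unitmx_mul scal_unit // dg_unit // mulf_neq0 ?invr_neq0.
    have HX : f (D%:M *m dg (al / D)) = 0.
      apply: (fMz); rewrite ?scal_unit ?dg_unit ?fscal ?fdg ?mulf_neq0 ?invr_neq0 //.
    have HL : f (ll (ga / al) *m (D%:M *m dg (al / D))) = 0 by apply: (fMz).
    by apply: (fMz) => //; rewrite unitmx_mul ll_unit Hd.
  move=> g Hg.
  suff fg0 : f g = 0 by rewrite fP // fg0 i0 addr0.
  rewrite (mx2E _ g); move: Hg; rewrite {1}(mx2E _ g) mx2_unit.
  move: (g 0 0) (g 0 1) (g 1 0) (g 1 1) => al be ga de Hd.
  case: (eqVneq al 0) => [al0 | alnz]; last exact: fgen.
  subst al.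
  have -> : mx2 0 be ga de = uu (-1) *m mx2 ga (be + de) ga de.
    by rewrite mx2_mul; apply: mx2_eq; ring.
  apply: (fMz) => //.
  - rewrite mx2_unit.
    by have -> : ga * de - (be + de) * ga = 0 * de - be * ga by ring.
  - apply: fgen; first by apply: contra_neq Hd => ->; ring.
    by have -> : ga * de - (be + de) * ga = 0 * de - be * ga by ring.
have [e [qe He]] : exists e, q e = 1 /\ forall g, g \in unitmx -> rho g e = e.
  case: (Classical_Prop.classic (exists x0, x0 != 0 /\ chi x0 != 1)).
  - move=> [x0 [x0nz ne]].
    have chix0 : chi x0 = -1.
      have := Hchi2 x0 x0nz; move/eqP; rewrite sqrf_eq1 (negbTE ne) /=.
      by move/eqP.
    have [c0 hc0] := key e0 (dg x0) (dg_unit x0 x0nz).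
    exists (e0 + i (c0 / 2)); split.
      by rewrite qD he0 (proj2 (qker _)) ?addr0 //; exists (c0 / 2).
    apply: Hmain; right; exists x0; split => //.
    rewrite rD ?dg_unit // hc0 irho ?dg_unit // det_dg chix0 -addrA -iD.
    by congr (_ + i _); field.
  - move=> H; exists e0; split => //; apply: Hmain; left => x xnz.
    apply/eqP; apply/negP => ne; apply: H; exists x; split => //.
    by apply/negP.
exists (fun c => c *: e); split.
- by move=> a' x y /=; rewrite scalerDl scalerA.
- by move=> c; rewrite qM qe mulr1.
- by move=> g Hg c; rewrite rM // He.
Qed.
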